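(* Under the standing setup: (i) if $\delta_B\ge 0$, then $D\in[D_{NM},D^+_{MOB}]$; (ii) if $\delta_B\le 0$, then $D\in[D^-_{MOB},D_{NM}]$; (iii) the bounds in (i) and (ii) are sharp under the respective sign assumption (absent additional information).
   Context: Let $(X,Y,N)$ be a random triple with $X\in\{0,1\}$, $Y$ real-valued, $N$ taking values in a finite set $\mathcal N$. Write $p_n=\Pr(N=n)$, $X_n=\mathbb E[X\mid N=n]$, $Y_n=\mathbb E[Y\mid N=n]$, $X_N=\mathbb E[X\mid N]$, $Y_N=\mathbb E[Y\mid N]$. Assume some $n$ has $p_n>0$ and $X_n\in(0,1)$, and fix reals $\underline Y\le\overline Y$ with $\mathbb E[Y\mid X=x,N=n]\in[\underline Y,\overline Y]$ whenever $\Pr(X=x,N=n)>0$. $D=\mathbb E[Y\mid X=1]-\mathbb E[Y\mid X=0]$; $\delta_B=\mathbb E[\mathrm{Cov}(Y,X\mid N)]$; $D_{NM}=\mathbb E[X_NY_N]/\mathbb E[X_N]-\mathbb E[(1-X_N)Y_N]/\mathbb E[1-X_N]$; $D^+_{MOB}=\big(\mathbb E[\min\{Y_N-\underline Y(1-X_N),\overline Y X_N\}]-\mathbb E[X]\mathbb E[Y]\big)/\mathrm{Var}(X)$, $D^-_{MOB}=\big(\mathbb E[Y](1-\mathbb E[X])-\mathbb E[\min\{Y_N-\underline Y X_N,\overline Y(1-X_N)\}]\big)/\mathrm{Var}(X)$. Sharpness under an assumption $\mathcal A$: the parameter lies in the interval for every joint distribution satisfying the standing assumptions and $\mathcal A$,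 and every value in the interval is attained by some joint distribution of $(X,Y,N)$ with the same observed $(p_n,X_n,Y_n)_n$, satisfying the standing bound and $\mathcal A$. *)

(* Defs.v *)
From HB Require Import structures.
From mathcomp Require Import all_boot all_order all_algebra.
From mathcomp Require Import all_classical all_reals all_analysis.
Set Implicit Arguments. Unset Strict Implicit. Unset Printing Implicit Defensive.
Import Order.TTheory GRing.Theory Num.Theory.
Local Open Scope classical_set_scope.
Local Open Scope ring_scope.

Section Defs.
Context {d : measure_display} {T : measurableType d} {R : realType}
  {I : finType}.
Variables (P : probability T R) (X Y : T -> R) (N : T -> I).

Definition Ex (f : T -> R) : R := fine ('E_P[f])%E.
Definition prob (A : set T) : R := fine (P A).
Definition condE (f : T -> R) (A : set T) : R :=
  Ex (fun t => f t * \1_A t) / prob A.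

Definition Nev (n : I) : set T := [set t | N t = n].
Definition XNev (x : R) (n : I) : set T := [set t | X t = x /\ N t = n].

Definition p_ (n : I) : R := prob (Nev n).
Definition X_ (n : I) : R := condE X (Nev n).
Definition Y_ (n : I) : R := condE Y (Nev n).
Definition XN : T -> R := fun t => X_ (N t).
Definition YN : T -> R := fun t => Y_ (N t).

Definition Dgap : R :=
  condE Y [set t | X t = 1] - condE Y [set t | X t = 0].
Definition covN (n : I) : R :=
  condE (fun t => Y t * X t) (Nev n) - Y_ n * X_ n.
Definition deltaB : R := Ex (fun t => covN (N t)).
Definition D_NM : R :=
  Ex (fun t => XN t * YN t) / Ex XN
  - Ex (fun t => (1 - XN t) * YN t) / Ex (fun t => 1 - XN t).
Definition VarX : R := fine (covariance P X X).
Definition D_MOBp (Ylo Yhi : R) : R :=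
  (Ex (fun t => Num.min (YN t - Ylo * (1 - XN t)) (Yhi * XN t))
   - Ex X * Ex Y) / VarX.
Definition D_MOBm (Ylo Yhi : R) : R :=
  (Ex Y * (1 - Ex X)
   - Ex (fun t => Num.min (YN t - Ylo * XN t) (Yhi * (1 - XN t)))) / VarX.

Definition standing (Ylo Yhi : R) : Prop :=
  [/\ measurable_fun setT X /\ (forall t, X t = 0 \/ X t = 1),
      measurable_fun setT Y /\ P.-integrable setT (EFin \o Y),
      (forall n, measurable (Nev n)),
      (exists n, 0 < p_ n /\ 0 < X_ n < 1) &
      (forall (x : R) n, (x = 0 \/ x = 1) -> 0 < prob (XNev x n) ->
          Ylo <= condE Y (XNev x n) <= Yhi)].

End Defs.

Definition same_observed {R : realType} {I : finType}
  {d : measure_display} {T : measurableType d} (P : probability T R)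
  (X Y : T -> R) (N : T -> I)
  {d' : measure_display} {T' : measurableType d'} (P' : probability T' R)
  (X' Y' : T' -> R) (N' : T' -> I) : Prop :=
  forall n, [/\ p_ P' N' n = p_ P N n, X_ P' X' N' n = X_ P X N n
              & Y_ P' Y' N' n = Y_ P Y N n].

(* Main.v *)
Require Import Defs.
From HB Require Import structures.
From mathcomp Require Import all_boot all_order all_algebra.
From mathcomp Require Import all_classical all_reals all_analysis.
From mathcomp Require Import measurable_realfun.
From mathcomp Require Import ring lra.
Import Order.TTheory GRing.Theory Num.Theory.
Local Open Scope classical_set_scope.
Local Open Scope ring_scope.
Section Alg.
Context {R : realFieldType} {Ylo Yhi a1 a0 b1 b0 : R}.
Definition cellok := [/\ 0 <= a1, 0 <= a0, Ylo * a1 <= b1 <= Yhi * a1 & Ylo * a0 <= b0 <= Yhi * a0].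
Local Notation pp := (a1 + a0).
Lemma zcase : cellok -> pp = 0 -> [/\ a1 = 0, a0 = 0, b1 = 0 & b0 = 0].
Proof.
case=> ha1 ha0 hb1 hb0 h; have e1 : a1 = 0 by lra.
have e0 : a0 = 0 by lra.
move: hb1 hb0; rewrite e1 e0 !mulr0 => /andP[h1 h2] /andP[h3 h4].
split => //; lra.
Qed.
Lemma pp_ge0 : cellok -> 0 <= pp.
Proof. case=> ha1 ha0 _ _; lra. Qed.
Lemma P1 : cellok -> a1 / pp * pp = a1.
Proof.
move=> H; case: (eqVneq pp 0) => h.
  by have [e1 e0 e2 e3] := zcase H h; rewrite e1 e0 !mul0r.
by rewrite mulfVK.
Qed.
Lemma P2 : cellok -> (1 - a1 / pp) * pp = a0.
Proof.
move=> H; case: (eqVneq pp 0) => h.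
  by have [e1 e0 e2 e3] := zcase H h; rewrite e1 e0 addr0 mulr0.
field; exact: h.
Qed.
Lemma P3 : cellok -> a1 / pp * ((b1 + b0) / pp) * pp = a1 * (b1 + b0) / pp.
Proof.
move=> H; case: (eqVneq pp 0) => h.
  by have [e1 e0 e2 e3] := zcase H h; rewrite e1 e0 addr0 !mulr0 !mul0r.
field; exact: h.
Qed.
Lemma P4 : cellok -> (1 - a1 / pp) * ((b1 + b0) / pp) * pp = b1 + b0 - a1 * (b1 + b0) / pp.
Proof.
move=> H; case: (eqVneq pp 0) => h.
  by have [e1 e0 e2 e3] := zcase H h; rewrite e1 e0 e2 e3 !addr0 !mulr0 !mul0r subr0.
field; exact: h.
Qed.
Lemma P5 : cellok -> (b1 / pp - (b1 + b0) / pp * (a1 / pp)) * pp = b1 - a1 * (b1 + b0) / pp.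
Proof.
move=> H; case: (eqVneq pp 0) => h.
  by have [e1 e0 e2 e3] := zcase H h; rewrite e1 e0 e2 e3 !addr0 !mulr0 !mul0r subr0.
field; exact: h.
Qed.
Lemma P6 : cellok -> Num.min ((b1 + b0) / pp - Ylo * (1 - a1 / pp)) (Yhi * (a1 / pp)) * pp
   = Num.min (b1 + b0 - Ylo * a0) (Yhi * a1).
Proof.
move=> H; case: (eqVneq pp 0) => h.
  by have [e1 e0 e2 e3] := zcase H h; rewrite e1 e0 e2 e3 !addr0 !mulr0 subr0 minxx.
rewrite minr_pMl; last exact: pp_ge0.
congr (Num.min _ _); field; exact: h.
Qed.
Lemma P7 : cellok -> Num.min ((b1 + b0) / pp - Ylo * (a1 / pp)) (Yhi * (1 - a1 / pp)) * pp
   = Num.min (b1 + b0 - Ylo * a1) (Yhi * a0).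
Proof.
move=> H; case: (eqVneq pp 0) => h.
  by have [e1 e0 e2 e3] := zcase H h; rewrite e1 e0 e2 e3 !addr0 !mulr0 subr0 minxx.
rewrite minr_pMl; last exact: pp_ge0.
congr (Num.min _ _); field; exact: h.
Qed.
Lemma min_cases (x y : R) : (Num.min x y = x /\ x <= y) \/ (Num.min x y = y /\ y <= x).
Proof. case: (leP x y) => h; [left|right]; split => //; exact: ltW. Qed.
Definition good (sg : R) := Ylo * a1 <= sg <= Yhi * a1 /\ Ylo * a0 <= b1 + b0 - sg <= Yhi * a0.
Lemma T0b : cellok -> good (a1 * (b1 + b0) / pp).
Proof.
move=> H; case: (eqVneq pp 0) => h.
  have [e1 e0 e2 e3] := zcase H h; rewrite /good e1 e0 e2 e3 !addr0 !mulr0 !mul0r subr0.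
  by rewrite lexx.
have hp : 0 < pp by rewrite lt_def h pp_ge0.
case: H => ha1 ha0 /andP[h1 h2] /andP[h3 h4].
set y := (b1 + b0) / pp.
have hy1 : Ylo <= y by rewrite /y ler_pdivlMr //; lra.
have hy2 : y <= Yhi by rewrite /y ler_pdivrMr //; lra.
rewrite /good; have -> : a1 * (b1 + b0) / pp = a1 * y by rewrite /y mulrA.
have -> : b1 + b0 - a1 * y = a0 * y by rewrite /y; field; exact: h.
rewrite /good; split; apply/andP; split; nra.
Qed.
Lemma T1b : Ylo <= Yhi -> cellok -> good (Num.min (b1 + b0 - Ylo * a0) (Yhi * a1)).
Proof.
move=> hY [ha1 ha0 /andP[h1 h2] /andP[h3 h4]].
case: (min_cases (b1 + b0 - Ylo * a0) (Yhi * a1)) => [[-> hm]|[-> hm]]; rewrite /good; split; apply/andP; split; nra.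
Qed.
Lemma T2b : Ylo <= Yhi -> cellok -> good (b1 + b0 - Num.min (b1 + b0 - Ylo * a1) (Yhi * a0)).
Proof.
move=> hY [ha1 ha0 /andP[h1 h2] /andP[h3 h4]].
case: (min_cases (b1 + b0 - Ylo * a1) (Yhi * a0)) => [[-> hm]|[-> hm]]; rewrite /good; split; apply/andP; split; nra.
Qed.
Lemma I1 : cellok -> b1 <= Num.min (b1 + b0 - Ylo * a0) (Yhi * a1).
Proof.
move=> [ha1 ha0 /andP[h1 h2] /andP[h3 h4]].
case: (min_cases (b1 + b0 - Ylo * a0) (Yhi * a1)) => [[-> hm]|[-> hm]]; lra.
Qed.
Lemma I2 : cellok -> b0 <= Num.min (b1 + b0 - Ylo * a1) (Yhi * a0).
Proof.
move=> [ha1 ha0 /andP[h1 h2] /andP[h3 h4]].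
case: (min_cases (b1 + b0 - Ylo * a1) (Yhi * a0)) => [[-> hm]|[-> hm]]; lra.
Qed.
Lemma convex_good u v l : good u -> good v -> 0 <= l <= 1 -> good ((1 - l) * u + l * v).
Proof.
move=> [/andP[u1 u2] /andP[u3 u4]] [/andP[v1 v2] /andP[v3 v4]] /andP[l1 l2].
rewrite /good; split; apply/andP; split; nra.
Qed.
End Alg.
Arguments cellok {R} Ylo Yhi a1 a0 b1 b0.
Arguments good {R} Ylo Yhi a1 a0 b1 b0 sg.
Section Alg2.
Context {R : realFieldType}.
Lemma Dform (Q1 Q0 S Z : R) : 0 < Q1 -> 0 < Q0 -> Q1 + Q0 = 1 ->
  Z / Q1 - (S - Z) / Q0 = (Z - Q1 * S) / (Q1 - Q1 ^+ 2).
Proof.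
move=> h1 h0 hs; have -> : Q0 = 1 - Q1 by lra.
have n1 : Q1 != 0 by rewrite gt_eqF.
have n0 : 1 - Q1 != 0 by rewrite gt_eqF //; lra.
have nV : Q1 - Q1 ^+ 2 != 0.
  have -> : Q1 - Q1 ^+ 2 = Q1 * (1 - Q1) by rewrite expr2; ring.
  by rewrite mulf_neq0.
field; rewrite n1 n0 nV //.
Qed.
Lemma Vpos (Q1 Q0 : R) : 0 < Q1 -> 0 < Q0 -> Q1 + Q0 = 1 -> 0 < Q1 - Q1 ^+ 2.
Proof.
move=> h1 h0 hs; have -> : Q1 - Q1 ^+ 2 = Q1 * Q0.
  have -> : Q0 = 1 - Q1 by lra.
  rewrite expr2; ring.
exact: mulr_gt0.
Qed.
Lemma divmono (V a b : R) : 0 < V -> (a / V <= b / V) = (a <= b).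
Proof. by move=> hV; rewrite ler_pM2r // invr_gt0. Qed.
Lemma interp (A B Z : R) : (A <= Z <= B) \/ (B <= Z <= A) ->
  exists l, 0 <= l <= 1 /\ (1 - l) * A + l * B = Z.
Proof.
move=> h; case: (eqVneq A B) => hAB.
  exists 0; rewrite lexx ler01; split => //; subst; case: h => /andP[h1 h2]; lra.
have nz : B - A != 0 by rewrite subr_eq0 eq_sym.
exists ((Z - A) / (B - A)).
have e : (Z - A) / (B - A) * (B - A) = Z - A by rewrite mulfVK.
split; last by field.
move: e; set l := (Z - A) / (B - A) => e.
case: h => /andP[h1 h2]; apply/andP; split; nra.
Qed.
End Alg2.
Section S.
Context {R : realType} {d : measure_display} {T : measurableType d} (P : probability T R).
Lemma LfunD (f g : T -> R) : f \in Lfun P 1 -> g \in Lfun P 1 -> (fun t => f t + g t) \in Lfun P 1.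
Proof. move=> hf hg. exact: (rpredD hf hg). Qed.
Lemma LfunZ (f : T -> R) k : f \in Lfun P 1 -> (fun t => k * f t) \in Lfun P 1.
Proof. move=> hf. exact: (rpredZ k hf). Qed.
Lemma Lfun0 : (fun _ : T => (0:R)) \in Lfun P 1.
Proof. exact: (Lfun_cst P 0 1). Qed.
Lemma ExD (f g : T -> R) : f \in Lfun P 1 -> g \in Lfun P 1 ->
  Ex P (fun t => f t + g t) = Ex P f + Ex P g.
Proof.
move=> hf hg; rewrite /Ex (expectationD hf hg) fineD //; exact: expectation_fin_num.
Qed.
Lemma ExZ (f : T -> R) k : f \in Lfun P 1 -> Ex P (fun t => k * f t) = k * Ex P f.
Proof.
move=> hf; rewrite /Ex; have -> : (fun t => k * f t) = k \o* f by apply/funext => t /=; rewrite mulrC. rewrite (expectationZl _ hf) fineM //; exact: expectation_fin_num.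
Qed.
Lemma Ex_cst c : Ex P (fun _ => c) = c.
Proof. by rewrite /Ex (expectation_cst P c). Qed.
Lemma Ex_indic (A : set T) : measurable A -> Ex P (\1_A) = prob P A.
Proof. by move=> mA; rewrite /Ex expectation_indic. Qed.
Lemma Lfun_indic (A : set T) : measurable A -> (\1_A : T -> R) \in Lfun P 1.
Proof. by move=> mA; apply/Lfun1_integrable; exact: integrable_indic. Qed.
Lemma Lfun_mulindic (f : T -> R) (A : set T) : measurable A -> f \in Lfun P 1 ->
   (fun t => f t * \1_A t) \in Lfun P 1.
Proof.
move=> mA /Lfun1_integrable hf; apply/Lfun1_integrable.
have := @integrableMl _ _ _ P setT measurableT (EFin \o f) (\1_A) hf.
rewrite /comp.
have -> : (fun x => (f x)%:E * (\1_A x)%:E)%E = (fun x => (f x * \1_A x)%:E) by [].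
apply => //.
exists 1; split => // M M1 x _ /=. rewrite indicE; case: (x \in A) => /=; rewrite ?normr1 ?normr0; [exact: ltW| exact: (le_trans ler01 (ltW M1))].
Qed.
Lemma Ex_sum (A : eqType) (r : seq A) (F : A -> T -> R) : (forall i, F i \in Lfun P 1) ->
  (fun t => \sum_(i <- r) F i t) \in Lfun P 1 /\
  Ex P (fun t => \sum_(i <- r) F i t) = \sum_(i <- r) Ex P (F i).
Proof.
move=> hF; elim: r => [|a r [IH1 IH2]].
  rewrite big_nil; under eq_fun do rewrite big_nil. by split; [exact: Lfun0|exact: Ex_cst].
under eq_fun do rewrite big_cons. rewrite big_cons; split; first exact: LfunD.
by rewrite ExD // IH2.
Qed.

End S.
Section C.
Context {R : realType} {I : finType} {d : measure_display} {T : measurableType d}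
  (P : probability T R) (X Y : T -> R) (N : T -> I).
Hypothesis mX : measurable_fun setT X.
Hypothesis X01 : forall t, X t = 0 \/ X t = 1.
Hypothesis mN : forall n, measurable (Nev N n).
Hypothesis hY : Y \in Lfun P 1.

Definition cell (b : bool) (n : I) : set T := XNev X N (b%:R) n.
Lemma mcell b n : measurable (cell b n).
Proof.
have := mX measurableT _ (measurable_set1 (b%:R)); rewrite setTI => h.
have -> : cell b n = X @^-1` [set b%:R] `&` Nev N n by [].
exact: measurableI.
Qed.
Lemma ind_cell b n t : (\1_(cell b n) t : R) = (((X t == 1) == b) && (N t == n))%:R.
Proof.
rewrite indicE; suff -> : (t \in cell b n) = ((X t == 1) == b) && (N t == n) by [].
have hb : (X t == 1) == b = (X t == b%:R).
  by case: (X01 t) => ->; case: b; rewrite ?eqxx //= ?oner_eq0 ?(eq_sym 0) ?oner_eq0.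
rewrite hb; have [h|h] := boolP (t \in cell b n).
  by move/set_mem: (h) => [-> ->]; rewrite !eqxx.
apply/esym; apply: negbTE; apply: contra h => /andP[/eqP h1 /eqP h2]; exact/mem_set.
Qed.
Lemma decomp (phi : bool -> I -> R) t :
  phi (X t == 1) (N t) = \sum_n \sum_(b : bool) phi b n * \1_(cell b n) t.
Proof.
rewrite (bigD1 (N t)) //= [X in _ + X]big1 => [|n hn]; last first.
  by apply: big1 => b _; rewrite ind_cell [N t == n]eq_sym (negbTE hn) andbF mulr0.
rewrite addr0 (bigD1 (X t == 1)) //= [X in _ + X]big1 => [|b hb]; last first.
  by rewrite ind_cell eq_sym (negbTE hb) mulr0.
by rewrite ind_cell !eqxx mulr1 addr0.
Qed.
Definition q b n := prob P (cell b n).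
Definition s b n := Ex P (fun t => Y t * \1_(cell b n) t).
Definition mf (al be : bool -> I -> R) t := al (X t == 1) (N t) + be (X t == 1) (N t) * Y t.
Definition G (al be : bool -> I -> R) b n t :=
  al b n * \1_(cell b n) t + be b n * (Y t * \1_(cell b n) t).
Lemma mf_eq al be : mf al be = fun t => \sum_(n <- index_enum I) \sum_(b <- index_enum bool) G al be b n t.
Proof.
apply/funext => t; rewrite /mf (decomp al) (decomp be) big_distrl /= -big_split.
apply: eq_bigr => n _; rewrite big_distrl -big_split; apply: eq_bigr => b _.
by rewrite /G /= -mulrA [_ * Y t]mulrC.
Qed.
Lemma G_Lfun al be b n : G al be b n \in Lfun P 1.
Proof.
apply: LfunD; apply: LfunZ; [exact: (@Lfun_indic R d T P _ (mcell b n))|exact: (@Lfun_mulindic R d T P Y _ (mcell b n) hY)].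
Qed.
Lemma Ex_G al be b n : Ex P (G al be b n) = al b n * q b n + be b n * s b n.
Proof.
have h1 := @Lfun_indic R d T P _ (mcell b n).
have h2 := @Lfun_mulindic R d T P Y _ (mcell b n) hY.
rewrite /G ExD; try (apply: LfunZ; assumption).
rewrite !ExZ ?Ex_indic //; exact: mcell.
Qed.
Lemma inner_sum al be n :
  (fun t => \sum_(b <- index_enum bool) G al be b n t) \in Lfun P 1 /\
  Ex P (fun t => \sum_(b <- index_enum bool) G al be b n t) = \sum_(b : bool) (al b n * q b n + be b n * s b n).
Proof.
have [h1 h2] := @Ex_sum R d T P bool (index_enum bool) (fun b t => G al be b n t) (G_Lfun al be ^~ n).
split => //; rewrite h2; apply: eq_bigr => b _; exact: Ex_G.
Qed.
Lemma mf_all al be : mf al be \in Lfun P 1 /\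
   Ex P (mf al be) = \sum_n \sum_(b : bool) (al b n * q b n + be b n * s b n).
Proof.
have [h1 h2] := @Ex_sum R d T P I (index_enum I) (fun n t => \sum_(b <- index_enum bool) G al be b n t)
  (fun n => (inner_sum al be n).1).
rewrite mf_eq; split => //; rewrite h2; apply: eq_bigr => n _; exact: (inner_sum al be n).2.
Qed.
Hypothesis mY : measurable_fun setT Y.
Lemma PE (A : set T) : measurable A -> P A = (prob P A)%:E.
Proof. by move=> mA; rewrite /prob fineK // fin_num_measure. Qed.
Lemma null_s (A : set T) : measurable A -> prob P A = 0 -> Ex P (fun t => Y t * \1_A t) = 0.
Proof.
move=> mA h0; rewrite /Ex unlock.
have -> : (fun x => (Y x * \1_A x)%:E) = ((EFin \o Y) \_ A)%E.
  apply/funext => x; rewrite /patch indicE; case: (x \in A) => /=; by rewrite ?mulr1 ?mulr0.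
rewrite -integral_mkcond null_set_integral //.
  apply/measurable_EFinP; exact: (measurable_funS measurableT (subsetT A) mY).
by have := PE _ mA; rewrite h0.
Qed.
Lemma E_gen (f : T -> R) al be : (forall t, f t = mf al be t) ->
  f \in Lfun P 1 /\
  Ex P f = \sum_n (al true n * q true n + be true n * s true n +
                   (al false n * q false n + be false n * s false n)).
Proof.
move=> hf; have -> : f = mf al be by apply/funext.
have [h1 h2] := mf_all al be; split => //; rewrite h2; apply: eq_bigr => n _.
by rewrite big_bool.
Qed.
Lemma X01b t : (X t = 0 /\ (X t == 1) = false) \/ (X t = 1 /\ (X t == 1) = true).
Proof. case: (X01 t) => ->; [left|right]; split => //; by rewrite ?eqxx // eq_sym oner_eq0. Qed.
Lemma sum_delta (F : I -> R) n : \sum_m (m == n)%:R * F m = F n.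
Proof.
rewrite (bigD1 n) //= big1 => [|m /negbTE ->]; by rewrite ?eqxx ?mul1r ?addr0 ?mul0r.
Qed.
Lemma ind_N n t : (\1_(Nev N n) t : R) = (N t == n)%:R.
Proof.
rewrite indicE; have [h|h] := eqVneq (N t) n.
  by rewrite mem_set.
by rewrite memNset //= => h'; rewrite /Nev /= h' eqxx in h.
Qed.
Definition pp n := q true n + q false n.
Lemma EN (g : I -> R) : (fun t => g (N t)) \in Lfun P 1 /\ Ex P (fun t => g (N t)) = \sum_n g n * pp n.
Proof.
have [h1 h2] := E_gen (fun t => g (N t)) (fun _ m => g m) (fun _ _ => 0) (fun t => ltac:(rewrite /mf; ring)).
split => //; rewrite h2; apply: eq_bigr => n _; rewrite /pp; ring.
Qed.
Lemma p_E n : p_ P N n = pp n.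
Proof.
rewrite /p_ -Ex_indic //.
have [_ ->] := E_gen (\1_(Nev N n)) (fun _ m => (m == n)%:R) (fun _ _ => 0)
   (fun t => ltac:(rewrite /mf ind_N; ring)).
rewrite -(sum_delta pp n); apply: eq_bigr => m _; rewrite /pp; ring.
Qed.
Lemma X_E n : X_ P X N n = q true n / pp n.
Proof.
rewrite /X_ /condE -/(p_ P N n) p_E.
have [_ ->] := E_gen (fun t => X t * \1_(Nev N n) t) (fun b m => b%:R * (m == n)%:R) (fun _ _ => 0)
   (fun t => ltac:(rewrite /mf ind_N; case: (X01b t) => [[-> ->]|[-> ->]] /=; ring)).
congr (_ / _); rewrite -(sum_delta (q true) n); apply: eq_bigr => m _; simpl; ring.
Qed.
Lemma Y_E n : Y_ P Y N n = (s true n + s false n) / pp n.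
Proof.
rewrite /Y_ /condE -/(p_ P N n) p_E.
have [_ ->] := E_gen (fun t => Y t * \1_(Nev N n) t) (fun _ _ => 0) (fun _ m => (m == n)%:R)
   (fun t => ltac:(rewrite /mf ind_N; ring)).
congr (_ / _); rewrite -(sum_delta (fun m => s true m + s false m) n); apply: eq_bigr => m _; simpl; ring.
Qed.
Lemma YX_E n : condE P (fun t => Y t * X t) (Nev N n) = s true n / pp n.
Proof.
rewrite /condE -/(p_ P N n) p_E.
have [_ ->] := E_gen (fun t => Y t * X t * \1_(Nev N n) t) (fun _ _ => 0) (fun b m => b%:R * (m == n)%:R)
   (fun t => ltac:(rewrite /mf ind_N; case: (X01b t) => [[-> ->]|[-> ->]] /=; ring)).
congr (_ / _); rewrite -(sum_delta (s true) n); apply: eq_bigr => m _; simpl; ring.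
Qed.
Lemma mXset x : measurable [set t | X t = x].
Proof. have := mX measurableT _ (measurable_set1 x); by rewrite setTI. Qed.
Lemma ind_X1 t : (\1_[set t | X t = 1] t : R) = (X t == 1)%:R.
Proof.
rewrite indicE; case: (X01b t) => [[h1 ->]|[h1 ->]].
  by rewrite memNset //= h1 => /eqP; rewrite eq_sym oner_eq0.
by rewrite mem_set.
Qed.
Lemma ind_X0 t : (\1_[set t | X t = 0] t : R) = (~~ (X t == 1))%:R.
Proof.
rewrite indicE; case: (X01b t) => [[h1 ->]|[h1 ->]].
  by rewrite mem_set.
by rewrite memNset //= h1 => /eqP; rewrite oner_eq0.
Qed.
Lemma ExX : X \in Lfun P 1 /\ Ex P X = \sum_n q true n.
Proof.
have [h1 h2] := E_gen X (fun b _ => b%:R) (fun _ _ => 0)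
   (fun t => ltac:(rewrite /mf; case: (X01b t) => [[-> ->]|[-> ->]] /=; ring)).
split => //; rewrite h2; apply: eq_bigr => m _; simpl; ring.
Qed.
Lemma ExY : Ex P Y = \sum_n (s true n + s false n).
Proof.
have [h1 h2] := E_gen Y (fun _ _ => 0) (fun _ _ => 1) (fun t => ltac:(rewrite /mf; ring)).
rewrite h2; apply: eq_bigr => m _; simpl; ring.
Qed.
Lemma PX1 : prob P [set t | X t = 1] = \sum_n q true n.
Proof.
rewrite -Ex_indic; last exact: mXset.
have [h1 h2] := E_gen (\1_[set t | X t = 1]) (fun b _ => b%:R) (fun _ _ => 0)
   (fun t => ltac:(rewrite /mf ind_X1; case: (X01b t) => [[-> ->]|[-> ->]] /=; ring)).
rewrite h2; apply: eq_bigr => m _; simpl; ring.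
Qed.
Lemma PX0 : prob P [set t | X t = 0] = \sum_n q false n.
Proof.
rewrite -Ex_indic; last exact: mXset.
have [h1 h2] := E_gen (\1_[set t | X t = 0]) (fun b _ => (~~ b)%:R) (fun _ _ => 0)
   (fun t => ltac:(rewrite /mf ind_X0; case: (X01b t) => [[-> ->]|[-> ->]] /=; ring)).
rewrite h2; apply: eq_bigr => m _; simpl; ring.
Qed.
Lemma Dgap_E : Dgap P X Y = (\sum_n s true n) / (\sum_n q true n) - (\sum_n s false n) / (\sum_n q false n).
Proof.
rewrite /Dgap /condE PX1 PX0.
have [_ ->] := E_gen (fun t => Y t * \1_[set t | X t = 1] t) (fun _ _ => 0) (fun b _ => b%:R)
   (fun t => ltac:(rewrite /mf ind_X1; case: (X01b t) => [[-> ->]|[-> ->]] /=; ring)).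
have [_ ->] := E_gen (fun t => Y t * \1_[set t | X t = 0] t) (fun _ _ => 0) (fun b _ => (~~ b)%:R)
   (fun t => ltac:(rewrite /mf ind_X0; case: (X01b t) => [[-> ->]|[-> ->]] /=; ring)).
congr (_ / _ - _ / _); apply: eq_bigr => m _; simpl; ring.
Qed.
Lemma VarX_E : VarX P X = \sum_n q true n - (\sum_n q true n) ^+ 2.
Proof.
have [hX EX] := ExX.
have hXX : (X * X)%R = X.
  apply/funext => t; change (X t * X t = X t); by case: (X01 t) => ->; rewrite ?mulr0 ?mulr1.
rewrite /VarX covarianceE //; last by rewrite hXX.
rewrite hXX -[X in fine (X - _)%E]fineK; last exact: expectation_fin_num.
rewrite -[X in fine (_ - X * _)%E]fineK; last exact: expectation_fin_num.
rewrite -[X in fine (_ - _ * X)%E]fineK; last exact: expectation_fin_num.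
by rewrite -EFinM -EFinB /= -/(Ex P X) EX expr2.
Qed.
Lemma q_ge0 b n : 0 <= q b n.
Proof. by rewrite /q /prob fine_ge0 // measure_ge0. Qed.
Lemma sum_pp : \sum_n pp n = 1.
Proof.
have [_ h] := EN (fun _ => 1); rewrite Ex_cst in h; rewrite h.
by apply: eq_bigr => n _; rewrite mul1r.
Qed.
Lemma s_bounds Ylo Yhi :
  (forall (x : R) n, (x = 0 \/ x = 1) -> 0 < prob P (XNev X N x n) ->
          Ylo <= condE P Y (XNev X N x n) <= Yhi) ->
  forall b n, Ylo * q b n <= s b n <= Yhi * q b n.
Proof.
move=> hb b n; have := q_ge0 b n; rewrite le_eqVlt => /orP[/eqP h0|hq].
  rewrite /s null_s; [by rewrite -h0 !mulr0 lexx|exact: mcell|by rewrite h0].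
have hx : (b%:R = 0 :> R) \/ (b%:R = 1 :> R) by clear hq; case: b; [right|left].
have := hb (b%:R) n hx hq.
rewrite /condE -/(s b n) -/(q b n) -/(cell b n) ?ler_pdivlMr ?ler_pdivrMr // => /andP[h1 h2].
Qed.
Lemma deltaB_E : deltaB P X Y N = \sum_n (s true n / pp n - (s true n + s false n) / pp n * (q true n / pp n)) * pp n.
Proof.
rewrite /deltaB (EN (fun n => covN P X Y N n)).2; apply: eq_bigr => n _.
by rewrite /covN YX_E Y_E X_E.
Qed.
Definition xn n := q true n / pp n.
Definition yn n := (s true n + s false n) / pp n.
Lemma XxE : X_ P X N = xn. Proof. apply/funext => n; exact: X_E. Qed.
Lemma YyE : Y_ P Y N = yn. Proof. apply/funext => n; exact: Y_E. Qed.
Lemma DNM_E : D_NM P X Y N = (\sum_n xn n * yn n * pp n) / (\sum_n xn n * pp n)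
   - (\sum_n (1 - xn n) * yn n * pp n) / (\sum_n (1 - xn n) * pp n).
Proof.
rewrite /D_NM (EN (fun n => X_ P X N n * Y_ P Y N n)).2 (EN (fun n => X_ P X N n)).2.
rewrite (EN (fun n => (1 - X_ P X N n) * Y_ P Y N n)).2 (EN (fun n => 1 - X_ P X N n)).2.
by rewrite XxE YyE.
Qed.
Lemma MOBp_E Ylo Yhi : D_MOBp P X Y N Ylo Yhi =
  (\sum_n Num.min (yn n - Ylo * (1 - xn n)) (Yhi * xn n) * pp n
   - (\sum_n q true n) * (\sum_n (s true n + s false n))) / (\sum_n q true n - (\sum_n q true n) ^+ 2).
Proof.
rewrite /D_MOBp VarX_E ExY (ExX).2 (EN (fun n => Num.min (Y_ P Y N n - Ylo * (1 - X_ P X N n)) (Yhi * X_ P X N n))).2.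
by rewrite XxE YyE.
Qed.
Lemma MOBm_E Ylo Yhi : D_MOBm P X Y N Ylo Yhi =
  ((\sum_n (s true n + s false n)) * (1 - \sum_n q true n)
   - \sum_n Num.min (yn n - Ylo * xn n) (Yhi * (1 - xn n)) * pp n)
   / (\sum_n q true n - (\sum_n q true n) ^+ 2).
Proof.
rewrite /D_MOBm VarX_E ExY (ExX).2 (EN (fun n => Num.min (Y_ P Y N n - Ylo * X_ P X N n) (Yhi * (1 - X_ P X N n)))).2.
by rewrite XxE YyE.
Qed.
End C.
Section D.
Context {R : realType} {I : finType} {d : measure_display} {T : measurableType d}
  (P : probability T R) (X : T -> R) (N : T -> I).
Hypothesis mX : measurable_fun setT X.
Hypothesis X01 : forall t, X t = 0 \/ X t = 1.
Hypothesis mN : forall n, measurable (Nev N n).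
Definition Yc (A : bool -> I -> R) t := A (X t == 1) (N t).
Let Z0 := Lfun0 P.
Lemma Yc_Lfun A : Yc A \in Lfun P 1.
Proof.
have [h _] := E_gen P X (fun _ => 0) N mX X01 mN Z0 (Yc A) A (fun _ _ => 0) (fun t => ltac:(rewrite /mf /Yc; ring)).
exact: h.
Qed.
Lemma Yc_meas A : measurable_fun setT (Yc A).
Proof. by move: (Yc_Lfun A); case/andP; rewrite !inE/=. Qed.
Lemma sYc A b n : s P X (Yc A) N b n = A b n * q P X N b n.
Proof.
rewrite /s; have [_ ->] := E_gen P X (fun _ => 0) N mX X01 mN Z0 (fun t => Yc A t * \1_(cell X N b n) t)
   (fun b' m => A b' m * (((b' == b) && (m == n)))%:R) (fun _ _ => 0)
   (fun t => ltac:(rewrite /mf /Yc (ind_cell X N X01); ring)).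
case: b; rewrite /= -?(sum_delta (fun m => A true m * q P X N true m) n)
   -?(sum_delta (fun m => A false m * q P X N false m) n);
apply: eq_bigr => m _ /=; ring.
Qed.
End D.
Section E.
Context {R : realType} {I : finType} {d : measure_display} {T : measurableType d}
  (P : probability T R) (X Y : T -> R) (N : T -> I) (Ylo Yhi : R).
Hypothesis mX : measurable_fun setT X.
Hypothesis X01 : forall t, X t = 0 \/ X t = 1.
Hypothesis mN : forall n, measurable (Nev N n).
Hypothesis hY : Y \in Lfun P 1.
Local Notation q1 := (q P X N true).
Local Notation q0 := (q P X N false).
Local Notation s1 := (s P X Y N true).
Local Notation s0 := (s P X Y N false).
Hypothesis hc : forall n, cellok Ylo Yhi (q1 n) (q0 n) (s1 n) (s0 n).
Definition t0 n := q1 n * (s1 n + s0 n) / (q1 n + q0 n).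
Lemma R_deltaB : deltaB P X Y N = \sum_n s1 n - \sum_n t0 n.
Proof.
rewrite (deltaB_E P X Y N mX X01 mN hY) -sumrB; apply: eq_bigr => n _.
by rewrite /yn /xn /pp (P5 (hc n)).
Qed.
Lemma R_DNM : D_NM P X Y N = (\sum_n t0 n) / (\sum_n q1 n)
   - (\sum_n (s1 n + s0 n) - \sum_n t0 n) / (\sum_n q0 n).
Proof.
rewrite (DNM_E P X Y N mX X01 mN hY) /yn /xn /pp -sumrB.
congr (_ / _ - _ / _); apply: eq_bigr => n _.
- by rewrite (P3 (hc n)).
- by rewrite (P1 (hc n)).
- by rewrite (P4 (hc n)).
- by rewrite (P2 (hc n)).
Qed.
Lemma R_MOBp : D_MOBp P X Y N Ylo Yhi =
  (\sum_n Num.min (s1 n + s0 n - Ylo * q0 n) (Yhi * q1 n)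
   - (\sum_n q1 n) * (\sum_n (s1 n + s0 n))) / (\sum_n q1 n - (\sum_n q1 n) ^+ 2).
Proof.
rewrite (MOBp_E P X Y N mX X01 mN hY) /yn /xn /pp; congr ((_ - _) / _); apply: eq_bigr => n _.
by rewrite (P6 (hc n)).
Qed.
Lemma R_MOBm : D_MOBm P X Y N Ylo Yhi =
  ((\sum_n (s1 n + s0 n)) * (1 - \sum_n q1 n)
   - \sum_n Num.min (s1 n + s0 n - Ylo * q1 n) (Yhi * q0 n)) / (\sum_n q1 n - (\sum_n q1 n) ^+ 2).
Proof.
rewrite (MOBm_E P X Y N mX X01 mN hY) /yn /xn /pp; congr ((_ - _) / _); apply: eq_bigr => n _.
by rewrite (P7 (hc n)).
Qed.
End E.
Lemma construct {R : realType} {I : finType} {d : measure_display} {T : measurableType d}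
  (P : probability T R) (X Y : T -> R) (N : T -> I) (Ylo Yhi : R)
  (mX : measurable_fun setT X) (X01 : forall t, X t = 0 \/ X t = 1)
  (mN : forall n, measurable (Nev N n)) (hY : Y \in Lfun P 1)
  (hex : exists n, 0 < p_ P N n /\ 0 < X_ P X N n < 1)
  (sg : I -> R)
  (hg : forall n, good Ylo Yhi (q P X N true n) (q P X N false n) (s P X Y N true n) (s P X Y N false n) (sg n)) :
  exists Y' : T -> R,
  [/\ Y' \in Lfun P 1, standing P X Y' N Ylo Yhi, same_observed P X Y N P X Y' N,
    forall n, s P X Y' N true n = sg n &
    forall n, s P X Y' N false n = s P X Y N true n + s P X Y N false n - sg n].
Proof.
pose A := fun b n => if b then sg n / q P X N true n
                      else (s P X Y N true n + s P X Y N false n - sg n) / q P X N false n.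
exists (Yc X N A).
have sA b n : s P X (Yc X N A) N b n = A b n * q P X N b n := sYc P X N mX X01 mN A b n.
have key1 n : A true n * q P X N true n = sg n.
  have [/andP[h1 h2] _] := hg n; rewrite /A /=.
  case: (eqVneq (q P X N true n) 0) => hq.
    by rewrite hq mulr0; apply/le_anti; move: h1 h2; rewrite hq !mulr0 => -> ->.
  by rewrite mulfVK.
have key0 n : A false n * q P X N false n = s P X Y N true n + s P X Y N false n - sg n.
  have [_ /andP[h1 h2]] := hg n; rewrite /A /=.
  case: (eqVneq (q P X N false n) 0) => hq.
    by rewrite hq mulr0; apply/le_anti; move: h1 h2; rewrite hq !mulr0 => -> ->.
  by rewrite mulfVK.
have hY' := Yc_Lfun P X N mX X01 mN A.
have s1' n : s P X (Yc X N A) N true n = sg n by rewrite sA key1.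
have s0' n : s P X (Yc X N A) N false n = s P X Y N true n + s P X Y N false n - sg n by rewrite sA key0.
split => //.
- split => //.
  + split; [exact: Yc_meas|exact/Lfun1_integrable].
  + move=> x n hx; case: hx => ->.
      change (0 < q P X N false n -> Ylo <= s P X (Yc X N A) N false n / q P X N false n <= Yhi).
      move=> hq; rewrite sA mulfK ?gt_eqF //; have [_ /andP[h1 h2]] := hg n.
      by rewrite /A /= ler_pdivlMr // ler_pdivrMr // h1 h2.
    change (0 < q P X N true n -> Ylo <= s P X (Yc X N A) N true n / q P X N true n <= Yhi).
    move=> hq; rewrite sA mulfK ?gt_eqF //; have [/andP[h1 h2] _] := hg n.
    by rewrite /A /= ler_pdivlMr // ler_pdivrMr // h1 h2.
- move=> n; split => //.
  rewrite (Y_E P X Y N mX X01 mN hY n) (Y_E P X (Yc X N A) N mX X01 mN hY' n) s1' s0'.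
  congr (_ / _); ring.
Qed.
Section Fin.
Context {R : realFieldType}.
Lemma final12 (Q1 Q0 S1 S0 S W M M' : R) : 0 < Q1 -> 0 < Q0 -> Q1 + Q0 = 1 -> S = S1 + S0 ->
  S1 <= M -> S0 <= M' ->
  (0 <= S1 - W -> W / Q1 - (S - W) / Q0 <= S1 / Q1 - S0 / Q0 <= (M - Q1 * S) / (Q1 - Q1 ^+ 2)) /\
  (S1 - W <= 0 -> (S * (1 - Q1) - M') / (Q1 - Q1 ^+ 2) <= S1 / Q1 - S0 / Q0 <= W / Q1 - (S - W) / Q0).
Proof.
move=> h1 h0 hs hS hM hM'.
have hV := Vpos _ _ h1 h0 hs.
have e0 : S0 = S - S1 by rewrite hS; ring.
have DF Z := Dform Q1 Q0 S Z h1 h0 hs.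
rewrite e0 !DF !divmono //.
split => hd; apply/andP; split; lra.
Qed.
Lemma final3 (Q1 Q0 S W M D0 : R) : 0 < Q1 -> 0 < Q0 -> Q1 + Q0 = 1 ->
  W / Q1 - (S - W) / Q0 <= D0 <= (M - Q1 * S) / (Q1 - Q1 ^+ 2) ->
  W <= D0 * (Q1 - Q1 ^+ 2) + Q1 * S <= M /\
  (D0 * (Q1 - Q1 ^+ 2) + Q1 * S) / Q1 - (S - (D0 * (Q1 - Q1 ^+ 2) + Q1 * S)) / Q0 = D0.
Proof.
move=> h1 h0 hs; have hV := Vpos _ _ h1 h0 hs.
have DF Z := Dform Q1 Q0 S Z h1 h0 hs.
rewrite !DF ler_pdivrMr // ler_pdivlMr // => /andP[a b].
split; first by apply/andP; split; lra.
rewrite addrK mulfK // gt_eqF //.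
Qed.
Lemma final4 (Q1 Q0 S W M' D0 : R) : 0 < Q1 -> 0 < Q0 -> Q1 + Q0 = 1 ->
  (S * (1 - Q1) - M') / (Q1 - Q1 ^+ 2) <= D0 <= W / Q1 - (S - W) / Q0 ->
  S - M' <= D0 * (Q1 - Q1 ^+ 2) + Q1 * S <= W /\
  (D0 * (Q1 - Q1 ^+ 2) + Q1 * S) / Q1 - (S - (D0 * (Q1 - Q1 ^+ 2) + Q1 * S)) / Q0 = D0.
Proof.
move=> h1 h0 hs; have hV := Vpos _ _ h1 h0 hs.
have DF Z := Dform Q1 Q0 S Z h1 h0 hs.
rewrite !DF ler_pdivrMr // ler_pdivlMr // => /andP[a b].
split; first by apply/andP; split; lra.
rewrite addrK mulfK // gt_eqF //.
Qed.
End Fin.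
Theorem proposition7 (R : realType) (I : finType) (Ylo Yhi : R)
  (d : measure_display) (T : measurableType d) (P : probability T R)
  (X Y : T -> R) (N : T -> I) :
  Ylo <= Yhi ->
  standing P X Y N Ylo Yhi ->
  (* (i) *)
  (0 <= deltaB P X Y N ->
     D_NM P X Y N <= Dgap P X Y <= D_MOBp P X Y N Ylo Yhi) /\
  (* (ii) *)
  (deltaB P X Y N <= 0 ->
     D_MOBm P X Y N Ylo Yhi <= Dgap P X Y <= D_NM P X Y N) /\
  (* (iii) sharpness of (i) *)
  (0 <= deltaB P X Y N ->
     forall D0 : R, D_NM P X Y N <= D0 <= D_MOBp P X Y N Ylo Yhi ->
     exists (d' : measure_display) (T' : measurableType d')
            (P' : probability T' R) (X' Y' : T' -> R) (N' : T' -> I),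
       [/\ standing P' X' Y' N' Ylo Yhi,
           same_observed P X Y N P' X' Y' N',
           0 <= deltaB P' X' Y' N' &
           Dgap P' X' Y' = D0]) /\
  (* (iii) sharpness of (ii) *)
  (deltaB P X Y N <= 0 ->
     forall D0 : R, D_MOBm P X Y N Ylo Yhi <= D0 <= D_NM P X Y N ->
     exists (d' : measure_display) (T' : measurableType d')
            (P' : probability T' R) (X' Y' : T' -> R) (N' : T' -> I),
       [/\ standing P' X' Y' N' Ylo Yhi,
           same_observed P X Y N P' X' Y' N',
           deltaB P' X' Y' N' <= 0 &
           Dgap P' X' Y' = D0]).
Proof.
move=> hle hst.
case: (hst) => [[mX X01] [mY iY] mN hex hb].
have hY : Y \in Lfun P 1 by apply/Lfun1_integrable.
have hc n : cellok Ylo Yhi (q P X N true n) (q P X N false n) (s P X Y N true n) (s P X Y N false n).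
  have h := s_bounds P X Y N mX mN mY Ylo Yhi hb.
  split; [exact: q_ge0|exact: q_ge0|exact: h|exact: h].
have hQ : \sum_n q P X N true n + \sum_n q P X N false n = 1.
  rewrite -big_split /=; exact: (sum_pp P X Y N mX X01 mN hY).
have [hQ1 hQ0] : 0 < \sum_n q P X N true n /\ 0 < \sum_n q P X N false n.
  case: hex => n [hp /andP[hx1 hx2]].
  rewrite (p_E P X Y N mX X01 mN hY n) /pp in hp.
  rewrite (X_E P X Y N mX X01 mN hY n) /pp in hx1 hx2.
  have q1pos : 0 < q P X N true n.
    by rewrite -(P1 (hc n)); apply: mulr_gt0.
  have q0pos : 0 < q P X N false n.
    by rewrite -(P2 (hc n)); apply: mulr_gt0 => //; rewrite subr_gt0.
  split; rewrite (bigD1 n) //=.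
    by apply: (lt_le_trans q1pos); rewrite lerDl; apply: sumr_ge0 => m _; exact: q_ge0.
  by apply: (lt_le_trans q0pos); rewrite lerDl; apply: sumr_ge0 => m _; exact: q_ge0.
have hS : \sum_n (s P X Y N true n + s P X Y N false n) = \sum_n s P X Y N true n + \sum_n s P X Y N false n.
  by rewrite big_split.
have hM : \sum_n s P X Y N true n <= \sum_n Num.min (s P X Y N true n + s P X Y N false n - Ylo * q P X N false n) (Yhi * q P X N true n).
  by apply: ler_sum => n _; exact: I1 (hc n).
have hM' : \sum_n s P X Y N false n <= \sum_n Num.min (s P X Y N true n + s P X Y N false n - Ylo * q P X N true n) (Yhi * q P X N false n).
  by apply: ler_sum => n _; exact: I2 (hc n).
have F := final12 _ _ _ _ _ (\sum_n t0 P X Y N n) _ _ hQ1 hQ0 hQ hS hM hM'.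
rewrite (Dgap_E P X Y N mX X01 mN hY) (R_deltaB P X Y N Ylo Yhi mX X01 mN hY hc)
   (R_DNM P X Y N Ylo Yhi mX X01 mN hY hc) (R_MOBp P X Y N Ylo Yhi mX X01 mN hY hc)
   (R_MOBm P X Y N Ylo Yhi mX X01 mN hY hc).
split; first exact: F.1.
split; first exact: F.2.
split.
  move=> _ D0 hD.
  have [hZ eZ] := final3 _ _ _ _ _ _ hQ1 hQ0 hQ hD.
  have [l [hl el]] := interp _ _ _ (or_introl hZ).
  pose sg n := (1 - l) * t0 P X Y N n + l * Num.min (s P X Y N true n + s P X Y N false n - Ylo * q P X N false n) (Yhi * q P X N true n).
  have hg n : good Ylo Yhi (q P X N true n) (q P X N false n) (s P X Y N true n) (s P X Y N false n) (sg n).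
    exact: (convex_good _ _ _ (T0b (hc n)) (T1b hle (hc n)) hl).
  have hsum : \sum_n sg n = D0 * (\sum_n q P X N true n - (\sum_n q P X N true n) ^+ 2) + (\sum_n q P X N true n) * \sum_n (s P X Y N true n + s P X Y N false n).
    rewrite /sg big_split /= -!mulr_sumr; exact: el.
  have [Y' [hY' st so es1 es0]] := construct P X Y N Ylo Yhi mX X01 mN hY hex sg hg.
  have hc' n : cellok Ylo Yhi (q P X N true n) (q P X N false n) (s P X Y' N true n) (s P X Y' N false n).
    by rewrite es1 es0; have [g1 g2] := hg n; split => //; exact: q_ge0.
  have ht0 : \sum_n t0 P X Y' N n = \sum_n t0 P X Y N n.
    by apply: eq_bigr => n _; rewrite /t0 es1 es0; congr (_ * _ / _); ring.
  exists d, T, P, X, Y', N; split => //.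
    rewrite (R_deltaB P X Y' N Ylo Yhi mX X01 mN hY' hc') ht0 (eq_bigr _ (fun n _ => es1 n)) hsum.
    by case/andP: hZ => hz1 hz2; rewrite subr_ge0.
  rewrite (Dgap_E P X Y' N mX X01 mN hY') (eq_bigr _ (fun n _ => es1 n)) (eq_bigr _ (fun n _ => es0 n)).
  by rewrite sumrB hsum.
move=> _ D0 hD.
have [hZ0 eZ] := final4 _ _ _ _ _ _ hQ1 hQ0 hQ hD.
pose t1 n := s P X Y N true n + s P X Y N false n - Num.min (s P X Y N true n + s P X Y N false n - Ylo * q P X N true n) (Yhi * q P X N false n).
have hZ : \sum_n t1 n <= D0 * (\sum_n q P X N true n - (\sum_n q P X N true n) ^+ 2) + (\sum_n q P X N true n) * \sum_n (s P X Y N true n + s P X Y N false n) <= \sum_n t0 P X Y N n.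
  by rewrite /t1 sumrB.
have [l [hl el]] := interp _ _ _ (or_intror hZ).
pose sg n := (1 - l) * t0 P X Y N n + l * t1 n.
have hg n : good Ylo Yhi (q P X N true n) (q P X N false n) (s P X Y N true n) (s P X Y N false n) (sg n).
  exact: (convex_good _ _ _ (T0b (hc n)) (T2b hle (hc n)) hl).
have hsum : \sum_n sg n = D0 * (\sum_n q P X N true n - (\sum_n q P X N true n) ^+ 2) + (\sum_n q P X N true n) * \sum_n (s P X Y N true n + s P X Y N false n).
  rewrite /sg big_split /= -!mulr_sumr; exact: el.
have [Y' [hY' st so es1 es0]] := construct P X Y N Ylo Yhi mX X01 mN hY hex sg hg.
  have hc' n : cellok Ylo Yhi (q P X N true n) (q P X N false n) (s P X Y' N true n) (s P X Y' N false n).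
  by rewrite es1 es0; have [g1 g2] := hg n; split => //; exact: q_ge0.
have ht0 : \sum_n t0 P X Y' N n = \sum_n t0 P X Y N n.
  by apply: eq_bigr => n _; rewrite /t0 es1 es0; congr (_ * _ / _); ring.
exists d, T, P, X, Y', N; split => //.
  rewrite (R_deltaB P X Y' N Ylo Yhi mX X01 mN hY' hc') ht0 (eq_bigr _ (fun n _ => es1 n)) hsum.
  by case/andP: hZ => hz1 hz2; rewrite subr_le0.
rewrite (Dgap_E P X Y' N mX X01 mN hY') (eq_bigr _ (fun n _ => es1 n)) (eq_bigr _ (fun n _ => es0 n)).
by rewrite sumrB hsum.
Qed.
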